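(* Let $\mu,\nu,\rho\in\mathbb{N}$ with $2\rho<\nu$ and $P(\mu+\nu)\le\rho$. Let $\mathcal E$ be the set of pairs $(m,n)\in\{q^{\mu-2},\dots,q^\mu-1\}\times\{q^{\nu-2},\dots,q^\nu-1\}$ for which there exists an integer $0\le k<q^{\mu+\rho}$ with $$f_P(mn+k)\overline{f_P(mn)}\ne f_P^{(\mu+2\rho)}(mn+k)\overline{f_P^{(\mu+2\rho)}(mn)}.$$ Then $\#\mathcal E\ll(\log q)\,q^{\mu+\nu-\rho+P(\mu+\nu+1)}$.
   Context: Fix an integer $q\ge2$. For an integer $n\ge0$, $\varepsilon_i(n)$ is the $i$-th digit of $n$ in base $q$ ($\varepsilon_0$ the units digit). For real $x>0$, $T_q(x)=\lfloor\log x/\log q\rfloor$. $e(x)=\exp(2\pi ix)$. $P:\mathbb{N}\to\mathbb{N}$ is a nondecreasing integer-valued function. For integers $x,y\ge0$, $a_P(x,y)=\sum_{i\ge0}\varepsilon_{i+P(y)}(x)\cdots\varepsilon_i(x)$. Fix $\alpha\in\mathbb{R}$; $f_P(x,y)=e(\alpha a_P(x,y))$ and $f_P(n)=f_P(n,T_q(n))$. For an integer $\rho\ge0$, $f_P^{(\rho)}(x,y)=f_P(x\bmod q^\rho,y)$ and $f_P^{(\rho)}(n)=f_P^{(\rho)}(n,T_q(n))$. The implied constant depends at most on $q$. *)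

(* Defs.v *)
From Stdlib Require Import Reals ZArith Arith List.
Open Scope R_scope.

Definition Cx : Type := (R * R)%type.
Definition Cmul (z w : Cx) : Cx :=
  (fst z * fst w - snd z * snd w, fst z * snd w + snd z * fst w).
Definition Cconj (z : Cx) : Cx := (fst z, - snd z).

Definition e (x : R) : Cx := (cos (2 * PI * x), sin (2 * PI * x)).

(* i-th digit of n in base q (eps_0 = units digit) *)
Definition digit (q i n : nat) : nat := ((n / q ^ i) mod q)%nat.

Definition Tq (q n : nat) : nat := Z.to_nat (Int_part (ln (INR n) / ln (INR q))).

Fixpoint sumn_lt (N : nat) (g : nat -> nat) : nat :=
  match N with
  | O => O
  | S N' => (sumn_lt N' g + g N')%nat
  end.

Fixpoint digit_prod (q x i L : nat) : nat :=
  match L with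
  | O => digit q i x
  | S L' => (digit_prod q x i L' * digit q (i + S L') x)%nat
  end.

(* a_P(x,y) = sum_{i >= 0} eps_{i+P(y)}(x) ... eps_i(x).
   Terms with i >= x vanish (since q^i > i, the digit eps_i(x) is 0 when
   q^i > x), so summing over i < x + 1 is the full (finite) sum. *)
Definition aP (q : nat) (P : nat -> nat) (x y : nat) : nat :=
  sumn_lt (S x) (fun i => digit_prod q x i (P y)).

Definition fP2 (q : nat) (P : nat -> nat) (alpha : R) (x y : nat) : Cx :=
  e (alpha * INR (aP q P x y)).
Definition fP (q : nat) (P : nat -> nat) (alpha : R) (n : nat) : Cx :=
  fP2 q P alpha n (Tq q n).

Definition fPr2 (q : nat) (P : nat -> nat) (alpha : R) (rho x y : nat) : Cx :=
  fP2 q P alpha (x mod q ^ rho)%nat y.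
Definition fPr (q : nat) (P : nat -> nat) (alpha : R) (rho n : nat) : Cx :=
  fPr2 q P alpha rho n (Tq q n).

Definition inE (q : nat) (P : nat -> nat) (alpha : R) (mu nu rho : nat)
  (mn : nat * nat) : Prop :=
  let m := fst mn in let n := snd mn in
  powerRZ (INR q) (Z.of_nat mu - 2) <= INR m /\ (m <= q ^ mu - 1)%nat /\
  powerRZ (INR q) (Z.of_nat nu - 2) <= INR n /\ (n <= q ^ nu - 1)%nat /\
  exists k : nat, (k < q ^ (mu + rho))%nat /\
    Cmul (fP q P alpha (m * n + k)) (Cconj (fP q P alpha (m * n)))
    <> Cmul (fPr q P alpha (mu + 2 * rho) (m * n + k))
            (Cconj (fPr q P alpha (mu + 2 * rho) (m * n))).

(* "#A <= B" for a set A of pairs: every duplicate-free list of elements of A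
   has length at most B. *)
Definition card_le (A : nat * nat -> Prop) (B : R) : Prop :=
  forall l : list (nat * nat), NoDup l -> (forall x, In x l -> A x) ->
    INR (length l) <= B.

(* Main.v *)
Require Import Defs.
From Stdlib Require Import Reals ZArith Arith List Lia Lra.
Open Scope R_scope.

Lemma pow_pos_nat q n : (1 <= q)%nat -> (1 <= q ^ n)%nat.
Proof. intros; induction n; simpl; nia. Qed.

Lemma lt_pow_self q n : (2 <= q)%nat -> (n < q ^ n)%nat.
Proof. intros; induction n; simpl; nia. Qed.

Lemma digit_mod q L d z : (2 <= q)%nat -> (d < L)%nat ->
  digit q d (z mod q ^ L) = digit q d z.
Proof.
  intros Hq Hd. unfold digit.
  replace L with (d + (S (L - d - 1)))%nat by lia.
  rewrite Nat.pow_add_r, Nat.Div0.mod_mul_r.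
  assert (Hp := pow_pos_nat q d ltac:(lia)).
  rewrite (Nat.mul_comm (q^d)), Nat.div_add by lia.
  rewrite Nat.div_small by (apply Nat.mod_upper_bound; lia). simpl.
  rewrite Nat.Div0.mod_mul_r, Nat.mul_comm, Nat.Div0.mod_add.
  apply Nat.Div0.mod_mod.
Qed.

Lemma digit_small q d z : (z < q ^ d)%nat -> digit q d z = 0%nat.
Proof. intros; unfold digit. rewrite Nat.div_small by lia. apply Nat.Div0.mod_0_l. Qed.

Lemma digit_high q L d z : (2 <= q)%nat -> (L <= d)%nat ->
  digit q d (z mod q ^ L) = 0%nat.
Proof.
  intros Hq Hd. apply digit_small.
  assert (z mod q^L < q^L)%nat by (apply Nat.mod_upper_bound; pose proof (pow_pos_nat q L); lia).
  assert (q^L <= q^d)%nat by (apply Nat.pow_le_mono_r; lia). lia.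
Qed.

Lemma digit_div q j d z : (j <= d)%nat ->
  digit q d z = digit q (d - j) (z / q ^ j).
Proof.
  intros. unfold digit. rewrite Nat.Div0.div_div, <- Nat.pow_add_r.
  f_equal. f_equal. f_equal. lia.
Qed.

Lemma digit_prod_zero q z i L j : (j <= L)%nat -> digit q (i + j) z = 0%nat ->
  digit_prod q z i L = 0%nat.
Proof.
  induction L; intros Hj H; simpl.
  - replace j with 0%nat in H by lia. rewrite Nat.add_0_r in H. exact H.
  - destruct (Nat.eq_dec j (S L)) as [->|]. rewrite H; lia.
    rewrite IHL by lia. lia.
Qed.

Lemma digit_prod_ext q z z' i L :
  (forall d, (i <= d <= i + L)%nat -> digit q d z = digit q d z') ->
  digit_prod q z i L = digit_prod q z' i L.
Proof.
  induction L; intros H; simpl.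
  - apply H; lia.
  - rewrite IHL by (intros; apply H; lia). rewrite H by lia. reflexivity.
Qed.

Lemma sumn_lt_ext N g h : (forall i, (i < N)%nat -> g i = h i) -> sumn_lt N g = sumn_lt N h.
Proof. induction N; intros H; simpl; auto. rewrite IHN, H; auto. Qed.

Lemma sumn_lt_add N g h : sumn_lt N (fun i => g i + h i)%nat = (sumn_lt N g + sumn_lt N h)%nat.
Proof. induction N; simpl; auto. rewrite IHN; lia. Qed.

Lemma aP_ext q P x y N : (2 <= q)%nat -> (S x <= N)%nat ->
  aP q P x y = sumn_lt N (fun i => digit_prod q x i (P y)).
Proof.
  intros Hq HN. unfold aP. induction HN as [|m Hm IH]; auto. rewrite IH. simpl.
  assert (digit q (m + 0) x = 0%nat).
  { apply digit_small. rewrite Nat.add_0_r. pose proof (lt_pow_self q m Hq). lia. }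
  rewrite (digit_prod_zero q x m (P y) 0). 2: lia. 2: assumption. lia.
Qed.

Lemma key q P x k t L p : (2 <= q)%nat -> (P t <= p)%nat -> (p <= L)%nat ->
  ((x + k) / q ^ (L - p) = x / q ^ (L - p))%nat ->
  (aP q P (x + k) t + aP q P (x mod q ^ L) t =
   aP q P x t + aP q P ((x + k) mod q ^ L) t)%nat.
Proof.
  intros Hq HP HL Hdiv.
  assert (HpL := pow_pos_nat q L ltac:(lia)).
  assert (x mod q^L <= x)%nat by (apply Nat.Div0.mod_le).
  assert ((x+k) mod q^L <= x + k)%nat by (apply Nat.Div0.mod_le).
  rewrite (aP_ext q P (x+k) t (S (x+k))) by lia.
  rewrite (aP_ext q P (x mod q^L) t (S (x+k))) by lia.
  rewrite (aP_ext q P x t (S (x+k))) by lia.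
  rewrite (aP_ext q P ((x+k) mod q^L) t (S (x+k))) by lia.
  rewrite <- !sumn_lt_add. apply sumn_lt_ext. intros i _.
  destruct (Nat.lt_ge_cases (i + P t) L).
  - rewrite (digit_prod_ext q (x mod q^L) x) by (intros; apply digit_mod; lia).
    rewrite (digit_prod_ext q ((x+k) mod q^L) (x+k)) by (intros; apply digit_mod; lia).
    lia.
  - rewrite (digit_prod_zero q (x mod q^L) i (P t) (P t)) by (auto; apply digit_high; lia).
    rewrite (digit_prod_zero q ((x+k) mod q^L) i (P t) (P t)) by (auto; apply digit_high; lia).
    rewrite (digit_prod_ext q (x+k) x); [lia|].
    intros d Hd. rewrite (digit_div q (L-p) d) by lia.
    rewrite (digit_div q (L-p) d x) by lia. rewrite Hdiv. reflexivity.
Qed.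
Lemma e_ratio a b : Cmul (e a) (Cconj (e b)) = e (a - b).
Proof.
  unfold Cmul, Cconj, e; simpl.
  replace (2 * PI * (a - b)) with (2*PI*a - 2*PI*b) by ring.
  rewrite cos_minus, sin_minus. f_equal; ring.
Qed.

Lemma ln_le' a b : 0 < a -> a <= b -> ln a <= ln b.
Proof. intros. destruct (Rle_lt_or_eq_dec _ _ H0). left; apply ln_increasing; auto. subst; lra. Qed.

Lemma Tq_char q x t : (2 <= q)%nat -> (q ^ t <= x < q ^ S t)%nat -> Tq q x = t.
Proof.
  intros Hq [H1 H2]. unfold Tq.
  assert (Hq' : 1 < INR q) by (apply lt_1_INR; lia).
  assert (Hlq : 0 < ln (INR q)) by (rewrite <- ln_1; apply ln_increasing; lra).
  assert (Hx : 0 < INR x).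
  { apply lt_0_INR. assert (0 < q^t)%nat by (apply Nat.neq_0_lt_0, Nat.pow_nonzero; lia). lia. }
  assert (E1 : INR t * ln (INR q) <= ln (INR x)).
  { rewrite <- ln_pow by lra. apply ln_le'. apply pow_lt; lra.
    rewrite <- pow_INR. apply le_INR; auto. }
  assert (E2 : ln (INR x) < INR (S t) * ln (INR q)).
  { rewrite <- ln_pow by lra. apply ln_increasing; auto.
    rewrite <- pow_INR. apply lt_INR; auto. }
  rewrite S_INR in E2.
  rewrite <- (Int_part_spec _ (Z.of_nat t)). apply Nat2Z.id.
  rewrite <- INR_IZR_INZ. split.
  - apply Rmult_lt_reg_r with (ln (INR q)); auto. unfold Rdiv.
    replace ((ln (INR x) * / ln (INR q) - 1) * ln (INR q)) with (ln (INR x) - ln (INR q)) by (field; lra). lra.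
  - apply Rmult_le_reg_r with (ln (INR q)); auto. unfold Rdiv.
    replace (ln (INR x) * / ln (INR q) * ln (INR q)) with (ln (INR x)) by (field; lra). lra.
Qed.

Lemma exists_t q x : (2 <= q)%nat -> (1 <= x)%nat -> exists t, (q ^ t <= x < q ^ S t)%nat.
Proof.
  intros Hq Hx.
  assert (forall N, (x < q ^ S N)%nat -> exists t, (q ^ t <= x < q ^ S t)%nat).
  { induction N; intros H.
    - exists 0%nat. simpl in *. lia.
    - destruct (Nat.lt_ge_cases x (q ^ S N)). auto. exists (S N). lia. }
  apply (H x). pose proof (Nat.pow_lt_mono_r q x (S x)). assert (x < q^x)%nat.
  { clear -Hq. induction x; simpl; nia. } lia.
Qed.

Lemma not_exc q P alpha L p x k t : (2 <= q)%nat -> (P t <= p)%nat -> (p <= L)%nat ->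
  (q ^ t <= x)%nat -> (x + k < q ^ S t)%nat ->
  ((x + k) / q ^ (L - p) = x / q ^ (L - p))%nat ->
  Cmul (fP q P alpha (x + k)) (Cconj (fP q P alpha x))
  = Cmul (fPr q P alpha L (x + k)) (Cconj (fPr q P alpha L x)).
Proof.
  intros Hq HP HL H1 H2 Hd.
  unfold fPr, fP, fPr2, fP2.
  rewrite (Tq_char q x t), (Tq_char q (x+k) t) by (auto; lia).
  rewrite !e_ratio. f_equal.
  pose proof (key q P x k t L p Hq HP HL Hd) as K.
  apply (f_equal INR) in K. rewrite !plus_INR in K. nra.
Qed.
Lemma powRZ_low q a m : (2 <= q)%nat -> powerRZ (INR q) (Z.of_nat a - 2) <= INR m ->
  (q ^ a <= m * q ^ 2)%nat.
Proof.
  intros Hq H. apply INR_le.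
  assert (Hq0 : INR q <> 0) by (apply not_0_INR; lia).
  assert (E : INR (q ^ a) = powerRZ (INR q) (Z.of_nat a - 2) * INR q ^ 2).
  { rewrite pow_INR, !pow_powerRZ, <- powerRZ_add by auto. f_equal. lia. }
  rewrite E, mult_INR, pow_INR. apply Rmult_le_compat_r; auto.
  apply pow_le. apply pos_INR.
Qed.

Lemma in_window m n k y W B : (1 <= m)%nat -> (m * n < y <= m * n + k)%nat -> (k < W)%nat ->
  (W <= B * m)%nat -> In n (seq ((y - W) / m) (B + 2)).
Proof.
  intros Hm [H1 H2] Hk HW. apply in_seq.
  pose proof (Nat.div_mod (y - W) m ltac:(lia)) as Hd.
  pose proof (Nat.mod_upper_bound (y - W) m ltac:(lia)) as Hr.
  set (s := ((y - W) / m)%nat) in *. set (r := ((y - W) mod m)%nat) in *.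
  split.
  - destruct (Nat.lt_ge_cases n s); [|lia]. exfalso.
    assert (m * n + m <= m * s)%nat by nia. nia.
  - destruct (Nat.lt_ge_cases n (s + (B+2))); [lia|]. exfalso.
    assert (m * (s + (B+2)) <= m * n)%nat by nia. nia.
Qed.

Theorem mainTheorem9 :
  forall q : nat, (2 <= q)%nat ->
  exists C : R, 0 < C /\
  forall (P : nat -> nat) (alpha : R) (mu nu rho : nat),
    (forall a b, (a <= b)%nat -> (P a <= P b)%nat) ->
    (2 * rho < nu)%nat ->
    (P (mu + nu) <= rho)%nat ->
    card_le (inE q P alpha mu nu rho)
      (C * ln (INR q) * INR q ^ (mu + nu - rho + P (mu + nu + 1))%nat).
Proof.
  intros q Hq.
  assert (Hq' : 1 < INR q) by (apply lt_1_INR; lia).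
  assert (Hlq : 0 < ln (INR q)) by (rewrite <- ln_1; apply ln_increasing; lra).
  exists (21 * INR q ^ 2 / ln (INR q)). split.
  { apply Rdiv_lt_0_compat; auto. apply Rmult_lt_0_compat; [lra|]. apply pow_lt; lra. }
  intros P alpha mu nu rho Hmono Hnu Hp l Hnd Hl.
  set (p := P (mu + nu)%nat) in *.
  set (L := (mu + 2 * rho)%nat).
  set (j := (L - p)%nat).
  set (W := (q ^ (mu + rho))%nat).
  set (B := (q ^ (rho + 2))%nat).
  set (Y := map (fun c => c * q ^ j)%nat (seq 0 (2 * q ^ (mu + nu - j)))
            ++ map (fun s => q ^ s)%nat (seq (mu + nu - 4) 5)).
  set (Lall := flat_map (fun m => flat_map (fun y => map (fun n => (m, n))
                  (seq ((y - W) / m) (B + 2))) Y) (seq 0 (q ^ mu))).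
  assert (Hpos : forall a, (1 <= q ^ a)%nat) by (intro a; apply pow_pos_nat; lia).
  assert (Hincl : incl l Lall).
  { intros [m n] Hin. specialize (Hl _ Hin).
    destruct Hl as (Hm1 & Hm2 & Hn1 & Hn2 & k & Hk & Hne). cbn [fst snd] in Hm1, Hm2, Hn1, Hn2, Hne.
    apply powRZ_low in Hm1; auto. apply powRZ_low in Hn1; auto.
    assert (Hm : (1 <= m)%nat) by (specialize (Hpos mu); nia).
    assert (Hn : (1 <= n)%nat) by (specialize (Hpos nu); nia).
    assert (Hmlt : (m < q ^ mu)%nat) by (specialize (Hpos mu); lia).
    assert (Hnlt : (n < q ^ nu)%nat) by (specialize (Hpos nu); lia).
    set (x := (m * n)%nat) in *.
    assert (Hx1 : (1 <= x)%nat) by nia.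
    assert (Hxlt : (x < q ^ (mu + nu))%nat) by (unfold x; rewrite Nat.pow_add_r; nia).
    assert (Hx4 : (q ^ (mu + nu) <= x * q ^ 4)%nat).
    { unfold x. rewrite Nat.pow_add_r. replace (q^4)%nat with (q^2 * q^2)%nat.
      nia. rewrite <- Nat.pow_add_r. reflexivity. }
    assert (HW : (W <= B * m)%nat).
    { unfold W, B. rewrite !Nat.pow_add_r. nia. }
    assert (HWle : (W <= q ^ (mu + nu))%nat).
    { unfold W. apply Nat.pow_le_mono_r; lia. }
    destruct (exists_t q x Hq Hx1) as [t [Ht1 Ht2]].
    assert (Htlt : (t < mu + nu)%nat).
    { destruct (Nat.lt_ge_cases t (mu + nu)); auto.
      assert (q ^ (mu+nu) <= q ^ t)%nat by (apply Nat.pow_le_mono_r; lia). lia. }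
    assert (Hpt : (P t <= p)%nat) by (apply Hmono; lia).
    assert (HpL : (p <= L)%nat) by (unfold L; lia).
    assert (Hjle : (j <= mu + nu)%nat) by (unfold j, L; lia).
    assert (Hy : exists y, In y Y /\ (x < y <= x + k)%nat).
    { destruct (Nat.lt_ge_cases (x + k) (q ^ S t)) as [Hc|Hc].
      - destruct (Nat.eq_dec ((x + k) / q ^ j) (x / q ^ j)) as [He|He].
        + exfalso. apply Hne. apply (not_exc q P alpha L p x k t); auto.
        + set (Q := (q ^ j)%nat) in *.
          assert (HQ : (1 <= Q)%nat) by apply Hpos.
          assert (Hle : (x / Q <= (x + k) / Q)%nat) by (apply Nat.Div0.div_le_mono; lia).
          pose proof (Nat.div_mod x Q ltac:(lia)).
          pose proof (Nat.mod_upper_bound x Q ltac:(lia)).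
          pose proof (Nat.div_mod (x + k) Q ltac:(lia)).
          exists ((x / Q + 1) * Q)%nat. split; [|split; nia].
          apply in_or_app. left. apply in_map_iff. exists (x / Q + 1)%nat.
          split; auto. apply in_seq. split; [lia|].
          assert (q ^ (mu + nu) = q ^ (mu + nu - j) * Q)%nat.
          { unfold Q. rewrite <- Nat.pow_add_r. f_equal. lia. }
          assert ((x / Q + 1) * Q <= x + k)%nat by nia.
          assert (x + k < 2 * q ^ (mu + nu))%nat by lia.
          nia.
      - exists (q ^ S t)%nat. split; [|lia].
        apply in_or_app. right. apply in_map_iff. exists (S t). split; auto.
        apply in_seq. split; [|lia].
        destruct (Nat.lt_ge_cases (S t + 4) (mu + nu)); [|lia].
        exfalso. assert (q ^ (S t + 4) <= q ^ (mu + nu))%nat by (apply Nat.pow_le_mono_r; lia).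
        assert (q ^ (S t + 4) = q ^ S t * q ^ 4)%nat by apply Nat.pow_add_r. nia. }
    destruct Hy as [y [HyY Hyx]].
    unfold Lall. apply in_flat_map. exists m. split. apply in_seq; lia.
    apply in_flat_map. exists y. split; auto. apply in_map.
    apply (in_window m n k y W B); auto. }
  pose proof (NoDup_incl_length Hnd Hincl) as Hlen.
  assert (HlenL : length Lall = (q ^ mu * ((2 * q ^ (mu + nu - j) + 5) * (B + 2)))%nat).
  { unfold Lall. rewrite (flat_map_constant_length (c := ((2 * q ^ (mu + nu - j) + 5) * (B + 2))%nat)).
    rewrite length_seq. reflexivity.
    intros m _. rewrite (flat_map_constant_length (c := (B + 2)%nat)).
    unfold Y. rewrite length_app, !length_map, !length_seq. reflexivity.
    intros y _. rewrite length_map, length_seq. reflexivity. }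
  set (E0 := (mu + nu - rho + p)%nat).
  set (E1 := (mu + nu - rho + P (mu + nu + 1))%nat).
  assert (HE : (q ^ E0 <= q ^ E1)%nat).
  { apply Nat.pow_le_mono_r; [lia|]. unfold E0, E1. specialize (Hmono (mu+nu)%nat (mu+nu+1)%nat). lia. }
  assert (Habc : (q ^ mu * q ^ (mu + nu - j) * q ^ rho = q ^ E0)%nat).
  { rewrite <- !Nat.pow_add_r. f_equal. unfold E0, j, L. lia. }
  assert (Hac : (q ^ mu * q ^ rho <= q ^ E0)%nat).
  { rewrite <- Nat.pow_add_r. apply Nat.pow_le_mono_r; unfold E0; lia. }
  assert (HB : B = (q ^ rho * q ^ 2)%nat) by (unfold B; apply Nat.pow_add_r).
  assert (Hfin : (length l <= 21 * q ^ 2 * q ^ E1)%nat).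
  { rewrite HlenL in Hlen. rewrite HB in Hlen.
    pose proof (Hpos mu). pose proof (Hpos rho). pose proof (Hpos (mu + nu - j)%nat).
    assert (1 <= q ^ 2)%nat by apply Hpos.
    set (a := (q ^ mu)%nat) in *. set (b := (q ^ (mu + nu - j))%nat) in *.
    set (c := (q ^ rho)%nat) in *. set (d := (q ^ 2)%nat) in *.
    set (Q0 := (q ^ E0)%nat) in *. set (Q1 := (q ^ E1)%nat) in *.
    assert (a * ((2 * b + 5) * (c * d + 2)) <= a * ((2 * b + 5) * (3 * (c * d))))%nat by nia.
    assert (a * ((2 * b + 5) * (3 * (c * d))) = 6 * d * (a * b * c) + 15 * d * (a * c))%nat by ring.
    nia. }
  apply le_INR in Hfin. rewrite !mult_INR, !pow_INR in Hfin.
  fold E1. unfold Rdiv.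
  replace (21 * INR q ^ 2 * / ln (INR q) * ln (INR q) * INR q ^ E1)
    with (INR 21 * INR q ^ 2 * INR q ^ E1) by (simpl; field; lra).
  exact Hfin.
Qed.
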